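(* Let $G$ be a complete $k$-partite graph ($k\ge3$) on $n$ vertices with parts $V_1,\dots,V_k$ and let $w_0$ be any initial weighting. Then for every $1\le i\le k$, $S_{w_0}(i)\le m_i$.
   Context: Robot crawler model: let $G=(V,E)$ be a finite connected simple graph with $|V|=n$. An initial weighting is a bijection $w_0:V\to\{-n,-n+1,\dots,-1\}$. At time $1$ the crawler visits $w_0^{-1}(-n)$. If the crawler visits vertex $v$ at time $t$, then $w_t(v)=t$ and $w_t(u)=w_{t-1}(u)$ for all $u\neq v$. If $\min_{y\in V}w_t(y)>0$, the process stops. Otherwise, at time $t+1$ the crawler moves to the neighbour $u$ of $v$ minimising $w_t(u)$. A vertex is ''cleaned'' at the first time it is visited. A complete $k$-partite graph with parts $V_1,\dots,V_k$ has an edge between $u$ and $v$ iff they lie in different parts. The surplus $S_{w_0}(i)$ of part $V_i$ is the number of not-yet-cleaned vertices of $V_i$ at the first moment when all vertices of $V\setminus V_i$ have been cleaned (and $0$ if $V_i$ is fully cleaned by then). The quantity $m_i$ is defined by $$m_i=\max\Big\{x\ge 0:\ \exists\, y\ge 0 \text{ with } 2y+x\le n \text{ and } \Big|\bigcup_{j=1}^{2y+x}w_0^{-1}(-j)\cap V_i\Big|=y+x\Big\},$$ i.e. the largest $x$ such that, for some $y\ge0$, exactly $y+x$ of the $2y+x$ cleanest vertices (those with initial weights $-1,\dots,-(2y+x)$) lie in $V_i$. Equivalently, with $X(t)=|\{v\in V_i: w_0(v)\ge -t\}|-|\{v\in V\setminus V_i: w_0(v)\ge -t\}|$, $m_i=\max_{0\le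 t\le n}X(t)$. *)

(* Defs.v *)
From mathcomp Require Import all_boot all_order all_algebra.
Set Implicit Arguments. Unset Strict Implicit. Unset Printing Implicit Defensive.
Import Order.TTheory GRing.Theory Num.Theory.
Local Open Scope ring_scope.

Definition next_vertex (T : finType) (e : rel T) (w : T -> int) (v : T) : T :=
  odflt v [pick u | e v u && [forall x, e v x ==> (w u <= w x)]].

Definition upd (T : finType) (w : T -> int) (v : T) (t : int) : T -> int :=
  fun u => if u == v then t else w u.

(* crawl e w0 v1 t = (w_t, vertex visited at time t), for t >= 1;
   v1 is the vertex with w0 v1 = -n, visited at time 1.
   (crawl at 0 is (w0, v1) as a harmless convention.) The process is
   continued formally past its stopping time; this is irrelevant for the
   surplus, which is determined before the process stops. *)
Fixpoint crawl (T : finType) (e : rel T) (w0 : T -> int) (v1 : T) (t : nat)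
  : (T -> int) * T :=
  match t with
  | 0%N => (w0, v1)
  | t'.+1 =>
      let: (w, v) := crawl e w0 v1 t' in
      let v' := if t' is 0%N then v1 else next_vertex e w v in
      (upd w v' (t'.+1)%:Z, v')
  end.

Definition crawl_pos (T : finType) (e : rel T) (w0 : T -> int) (v1 : T) (t : nat) : T :=
  (crawl e w0 v1 t).2.

Definition cleaned (T : finType) (e : rel T) (w0 : T -> int) (v1 : T) (t : nat) (u : T) : bool :=
  has (fun s => crawl_pos e w0 v1 s == u) (iota 1 t).

Definition kpart_rel (T : finType) (k : nat) (p : T -> 'I_k) : rel T :=
  fun u v => p u != p v.

Definition outside_cleaned (T : finType) (k : nat) (p : T -> 'I_k) (w0 : T -> int)
  (v1 : T) (i : 'I_k) (t : nat) : bool :=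
  [forall u, (p u != i) ==> cleaned (kpart_rel p) w0 v1 t u].

Definition first_outside_cleaned (T : finType) (k : nat) (p : T -> 'I_k) (w0 : T -> int)
  (v1 : T) (i : 'I_k) (t : nat) : bool :=
  outside_cleaned p w0 v1 i t && [forall s : 'I_t, ~~ outside_cleaned p w0 v1 i s].

Definition uncleaned_in_part (T : finType) (k : nat) (p : T -> 'I_k) (w0 : T -> int)
  (v1 : T) (i : 'I_k) (t : nat) : nat :=
  #|[set u | (p u == i) && ~~ cleaned (kpart_rel p) w0 v1 t u]|.

Definition cleanest_in_part (T : finType) (k : nat) (p : T -> 'I_k) (w0 : T -> int)
  (i : 'I_k) (j : nat) : nat :=
  #|[set v | (p v == i) && ((- (j%:Z) <= w0 v) && (w0 v <= -1))]|.

Definition m_part (T : finType) (k : nat) (p : T -> 'I_k) (w0 : T -> int) (i : 'I_k) : nat :=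
  (\max_(x < #|T|.+1 | [exists y : 'I_#|T|.+1,
        (y.*2 + x <= #|T|)%N && (cleanest_in_part p w0 i (y.*2 + x) == y + x)%N]) x)%N.

(* Main.v *)
Require Import Defs.
From mathcomp Require Import all_boot all_order all_algebra.
From mathcomp Require Import zify.
Import Order.TTheory GRing.Theory Num.Theory.
Local Open Scope ring_scope.
Set Implicit Arguments. Unset Strict Implicit.

Lemma crawlS (T : finType) (e : rel T) w0 v1 t :
  crawl e w0 v1 t.+1 =
  (upd (crawl e w0 v1 t).1 (crawl_pos e w0 v1 t.+1) (t.+1)%:Z, crawl_pos e w0 v1 t.+1).
Proof. by rewrite /crawl_pos /=; case: (crawl e w0 v1 t). Qed.

Lemma crawl_pos1 (T : finType) (e : rel T) w0 v1 : crawl_pos e w0 v1 1 = v1.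
Proof. by []. Qed.

Lemma crawl_posSS (T : finType) (e : rel T) w0 v1 t :
  crawl_pos e w0 v1 t.+2 =
  next_vertex e (crawl e w0 v1 t.+1).1 (crawl_pos e w0 v1 t.+1).
Proof.
by rewrite /crawl_pos /=; case: (crawl e w0 v1 t) => w v /=.
Qed.

Lemma cleanedS (T : finType) (e : rel T) w0 v1 t u :
  cleaned e w0 v1 t.+1 u = cleaned e w0 v1 t u || (crawl_pos e w0 v1 t.+1 == u).
Proof. by rewrite /cleaned -[t.+1]addn1 iotaD has_cat /= orbF add1n addn1. Qed.

Lemma cleaned0 (T : finType) (e : rel T) w0 v1 u : cleaned e w0 v1 0 u = false.
Proof. by []. Qed.

Lemma W_unc (T : finType) (e : rel T) w0 v1 t u :
  ~~ cleaned e w0 v1 t u -> (crawl e w0 v1 t).1 u = w0 u.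
Proof.
elim: t => [//|t IH]; rewrite cleanedS negb_or crawlS /= /upd => /andP[h1 h2].
by rewrite eq_sym (negbTE h2) IH.
Qed.

Lemma W_cl (T : finType) (e : rel T) w0 v1 t u :
  cleaned e w0 v1 t u -> 0 < (crawl e w0 v1 t).1 u.
Proof.
elim: t => [//|t IH]; rewrite cleanedS crawlS /= /upd.
case: (u =P crawl_pos e w0 v1 t.+1) => [_ _|ne]; first by [].
by rewrite eq_sym; move/eqP: ne => /negbTE -> ; rewrite orbF => /IH.
Qed.

Lemma next_spec (T : finType) k (p : T -> 'I_k) (w : T -> int) v :
  (exists x, p x != p v) ->
  p v != p (next_vertex (kpart_rel p) w v) /\
  forall x, p v != p x -> w (next_vertex (kpart_rel p) w v) <= w x.
Proof.
move=> [x hx]; rewrite /next_vertex.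
case: pickP => [u /andP[h1 /forallP h2] | hnone] /=.
  by split => // y hy; exact: (implyP (h2 y) hy).
exfalso; have hx' : p v != p x by rewrite eq_sym.
have [u hu hmin] := @arg_minP _ _ _ x (fun y => p v != p y) w hx'.
move: (hnone u); rewrite /kpart_rel hu /=; move/negbT/forallPn => [y].
by rewrite negb_imply => /andP[hy]; rewrite (hmin y hy).
Qed.

Lemma exists_other (T : finType) k (p : T -> 'I_k) (hk : (2 <= k)%N)
  (hpart : forall j : 'I_k, exists v : T, p v = j) (j : 'I_k) : exists x, p x != j.
Proof.
have h0 : (0 < k)%N by lia.
have h1 : (1 < k)%N by lia.
case E: (val j == 0%N).
  have [x hx] := hpart (Ordinal h1); exists x; rewrite hx.
  by apply/eqP => /(congr1 val) /=; move/eqP: E => ->.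
have [x hx] := hpart (Ordinal h0); exists x; rewrite hx.
by apply/eqP => /(congr1 val) /= h; move: E; rewrite -[val j]/(nat_of_ord j) -h.
Qed.

Definition Uc (T : finType) k (p : T -> 'I_k) w0 v1 t v :=
  ~~ cleaned (kpart_rel p) w0 v1 t v.

Lemma step (T : finType) k (p : T -> 'I_k) w0 v1 (hk : (2 <= k)%N)
  (hpart : forall j : 'I_k, exists v : T, p v = j) (hneg : forall v, w0 v < 0) s :
  let c := crawl_pos (kpart_rel p) w0 v1 s.+1 in
  let u := crawl_pos (kpart_rel p) w0 v1 s.+2 in
  [/\ p c != p u,
      forall v, Uc p w0 v1 s.+2 v = Uc p w0 v1 s.+1 v && (u != v) &
      (exists x, Uc p w0 v1 s.+1 x && (p c != p x)) ->
        Uc p w0 v1 s.+1 u /\ forall x, Uc p w0 v1 s.+1 x -> p c != p x -> w0 u <= w0 x].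
Proof.
move=> c u.
have [hne hmin] := next_spec (crawl (kpart_rel p) w0 v1 s.+1).1 (exists_other hk hpart (p c)).
rewrite -crawl_posSS -/u in hne hmin.
split => //.
  by move=> v; rewrite /Uc cleanedS negb_or.
move=> [x /andP[hx hpx]].
have hux := hmin x hpx; rewrite /Uc in hx; rewrite (W_unc hx) in hux.
have hu : Uc p w0 v1 s.+1 u.
  apply/negP => hc; have := W_cl hc; have := hneg x; lia.
split => // y hy hpy.
by have := hmin y hpy; rewrite /Uc in hy hu; rewrite (W_unc hy) (W_unc hu).
Qed.

Definition cnt (T : finType) (P : pred T) : nat := (\sum_(v : T) (P v : nat))%N.

Lemma cnt_ext (T : finType) (P Q : pred T) : P =1 Q -> cnt P = cnt Q.
Proof. by move=> h; apply: eq_bigr => v _; rewrite h. Qed.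

Lemma cnt_split (T : finType) (P Q : pred T) :
  cnt P = (cnt (fun v => P v && Q v) + cnt (fun v => P v && ~~ Q v))%N.
Proof.
rewrite /cnt -big_split /=; apply: eq_bigr => v _.
by case: (P v); case: (Q v).
Qed.

Lemma cnt_le (T : finType) (P Q : pred T) : (forall v, P v -> Q v) -> (cnt P <= cnt Q)%N.
Proof.
move=> h; apply: leq_sum => v _; case E: (P v) => //=.
by rewrite (h v E).
Qed.

Lemma cnt_le_or (T : finType) (R P Q : pred T) : (forall v, R v -> P v || Q v) ->
  (cnt R <= cnt P + cnt Q)%N.
Proof.
move=> h; rewrite /cnt -big_split /=; apply: leq_sum => v _; case E: (R v) => //=.
by move: (h v E); case: (P v); case: (Q v).
Qed.

Lemma cnt0 (T : finType) (P : pred T) : (forall v, ~~ P v) -> cnt P = 0%N.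
Proof. by move=> h; apply: big1 => v _; rewrite (negbTE (h v)). Qed.

Lemma cnt_pos (T : finType) (P : pred T) u : P u -> (1 <= cnt P)%N.
Proof. by move=> h; rewrite /cnt (bigD1 u) //= h. Qed.

Lemma cnt_le1 (T : finType) (P : pred T) : (forall u v, P u -> P v -> u = v) -> (cnt P <= 1)%N.
Proof.
move=> h; case: (pickP P) => [u hu|hn].
  rewrite /cnt (bigD1 u) //= hu big1 // => v hv.
  by apply/eqP; rewrite eqb0; apply/negP => hv'; move/eqP: hv; apply; apply: h.
by rewrite cnt0 // => v; rewrite hn.
Qed.

Lemma card_cnt (T : finType) (P : pred T) : #|[set v | P v]| = cnt P.
Proof.
rewrite cardsE -sum1_card big_mkcond /=; apply: eq_bigr => v _.
by rewrite /in_mem /=; case: (P v).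
Qed.

Lemma cnt_T (T : finType) : cnt (@predT T) = #|T|.
Proof. by rewrite /cnt -sum1_card. Qed.

Lemma cnt_range (T : finType) (w0 : T -> int) (hinj : injective w0) (a b : nat) :
  (a <= b)%N -> (cnt (fun v => (-(b%:Z) <= w0 v) && (w0 v < -(a%:Z)))%R <= b - a)%N.
Proof.
elim: b => [|b IH] hab.
  rewrite cnt0 // => v; apply/negP => /andP[]; have -> : a = 0%N by lia. lia.
case: (ltnP a b.+1) => h.
  have h' : (a <= b)%N by lia.
  apply: (leq_trans (cnt_le_or (P := fun v => (-(b%:Z) <= w0 v) && (w0 v < -(a%:Z)))
                                (Q := fun v => w0 v == - (b.+1%:Z)) _)).
    move=> v /andP[h1 h2]; case: (ltP (w0 v) (-(b%:Z))) => h3.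
      by apply/orP; right; apply/eqP; lia.
    by apply/orP; left; apply/andP; split.
  have := IH h'.
  have : (cnt (fun v => w0 v == - (b.+1%:Z))%R <= 1)%N.
    by apply: cnt_le1 => x y /eqP hx /eqP hy; apply: hinj; rewrite hx hy.
  lia.
rewrite cnt0 // => v; apply/negP => /andP[]; have -> : a = b.+1 by lia. lia.
Qed.

Lemma cnt_top (T : finType) (w0 : T -> int) (hinj : injective w0)
  (hrange : forall v : T, - (#|T|%:Z) <= w0 v <= -1) (j : nat) :
  (j <= #|T|)%N -> cnt (fun v => -(j%:Z) <= w0 v) = j.
Proof.
move=> hj.
have hA := cnt_range hinj (leq0n j).
have hB := cnt_range hinj hj.
have hT := cnt_split (@predT T) (fun v => -(j%:Z) <= w0 v).
rewrite cnt_T in hT.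
have e1 : cnt (fun v => predT v && (-(j%:Z) <= w0 v)) =
          cnt (fun v => (-(j%:Z) <= w0 v) && (w0 v < -(0%:Z))).
  apply: cnt_ext => v /=; have := hrange v; case: (-(j%:Z) <= w0 v) => //=; lia.
have e2 : cnt (fun v => predT v && ~~ (-(j%:Z) <= w0 v)) =
          cnt (fun v => (-(#|T|%:Z) <= w0 v) && (w0 v < -(j%:Z))).
  apply: cnt_ext => v /=; have := hrange v; rewrite -ltNge.
  case: (w0 v < -(j%:Z)) => /=; lia.
rewrite e1 in hT; rewrite e2 in hT.
have -> : cnt (fun v => -(j%:Z) <= w0 v) =
          cnt (fun v => (-(j%:Z) <= w0 v) && (w0 v < -(0%:Z))).
  apply: cnt_ext => v /=; have := hrange v; case: (-(j%:Z) <= w0 v) => //=; lia.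
lia.
Qed.

Lemma cnt_at (T : finType) (P : pred T) u : cnt (fun v => P v && (v == u)) = P u.
Proof.
rewrite /cnt (bigD1 u) //= eqxx andbT big1 ?addn0 // => v hv.
by rewrite (negbTE hv) andbF.
Qed.

Definition Xi (T : finType) k (p : T -> 'I_k) (w0 : T -> int) (i : 'I_k) (a b : nat) : nat :=
  cnt (fun v => (p v == i) && ((-(b%:Z) <= w0 v) && (w0 v < -(a%:Z)))).
Definition Xo (T : finType) k (p : T -> 'I_k) (w0 : T -> int) (i : 'I_k) (a b : nat) : nat :=
  cnt (fun v => (p v != i) && ((-(b%:Z) <= w0 v) && (w0 v < -(a%:Z)))).
Definition Bc (T : finType) k (p : T -> 'I_k) (w0 : T -> int) v1 (i : 'I_k) t (L : nat) : nat :=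
  cnt (fun v => (p v == i) && Uc p w0 v1 t v && (w0 v < -(L%:Z))).

Definition Inv (T : finType) k (p : T -> 'I_k) (w0 : T -> int) v1 (i : 'I_k) t (L : nat) : Prop :=
  [/\ (L <= #|T|)%N,
   (forall v, -(L%:Z) <= w0 v -> Uc p w0 v1 t v),
   (forall u v, Uc p w0 v1 t u -> Uc p w0 v1 t v -> w0 u < -(L%:Z) -> w0 v < -(L%:Z) -> p u = p v) &
   ((forall v, p v = i -> ~~ Uc p w0 v1 t v) \/
    exists j, [/\ (L <= j)%N, (j <= #|T|)%N &
      (Bc p w0 v1 i t L + (p (crawl_pos (kpart_rel p) w0 v1 t) == i) + Xo p w0 i L j
        <= Xi p w0 i L j)%N])].

Lemma single (T : finType) k (p : T -> 'I_k) (w0 : T -> int) (i : 'I_k)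
  (hinj : injective w0) u (L' : nat) :
  w0 u = -(L'.+1%:Z) -> (L'.+1 <= #|T|)%N ->
  exists j, [/\ (L' <= j)%N, (j <= #|T|)%N & ((p u == i) + Xo p w0 i L' j <= Xi p w0 i L' j)%N].
Proof.
move=> hu hn; case hpu: (p u == i).
  exists L'.+1; split => //.
  rewrite /Xo cnt0; last first.
    move=> v; apply/negP => /andP[hv hr].
    have e : v = u by apply: hinj; rewrite hu; lia.
    by rewrite e hpu in hv.
  rewrite addn0; apply: (@cnt_pos _ _ u); rewrite hpu hu /=; lia.
exists L'; split => //; first lia.
rewrite /Xo cnt0 //= => v; apply/negP => /andP[_]; lia.
Qed.

Lemma inv_step (T : finType) k (p : T -> 'I_k) (w0 : T -> int) v1 (i : 'I_k)
  (hk : (2 <= k)%N) (hpart : forall j : 'I_k, exists v : T, p v = j)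
  (hinj : injective w0) (hrange : forall v : T, - (#|T|%:Z) <= w0 v <= -1) s L :
  Inv p w0 v1 i s.+1 L -> exists L', Inv p w0 v1 i s.+2 L'.
Proof.
move=> [hL hP1 hP2 hP3].
have hneg : forall v, w0 v < 0 by move=> v; have := hrange v; lia.
have [hcu hU hmin] := step v1 hk hpart hneg s.
set c := crawl_pos (kpart_rel p) w0 v1 s.+1 in hcu hU hmin hP3.
set u := crawl_pos (kpart_rel p) w0 v1 s.+2 in hcu hU hmin *.
set U1 := Uc p w0 v1 s.+1 in hU hmin hP1 hP2 hP3.
set U2 := Uc p w0 v1 s.+2 in hU *.
case: (boolP [exists x, U1 x && (p c != p x)]) => [/existsP hex | hnex].
  have [hu hmn] := hmin hex.
  case: (ltP (w0 u) (-(L%:Z))) => hwu.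
    exists L; rewrite /Inv -/U2; split => //.
    - move=> v hv; rewrite hU (hP1 v hv) /=; apply/negP => /eqP huv.
      by rewrite -huv in hv; lia.
    - by move=> x y; rewrite !hU => /andP[hx _] /andP[hy _]; exact: hP2.
    - case: hP3 => [hno|[j [hLj hjn hineq]]].
        by left => v hv; rewrite hU negb_and hno.
      right; exists j; split => //.
      have e := cnt_split (fun v => (p v == i) && U1 v && (w0 v < -(L%:Z))) (fun v => v == u).
      rewrite cnt_at hu /= in e.
      have e2 : cnt (fun v => (p v == i) && U1 v && (w0 v < - (L%:Z)) && ~~ (v == u))
                = Bc p w0 v1 i s.+2 L.
        apply: cnt_ext => v /=; rewrite -/U2 hU [u == v]eq_sym; lia.
      rewrite e2 in e; rewrite /Bc -/U1 in hineq.
      move: hineq; rewrite e; case: (p u == i) => /=; lia.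
  have [L' hL'] : exists L' : nat, w0 u = -(L'.+1%:Z).
    by exists (`|w0 u| - 1)%N; have := hrange u; lia.
  have hL'L : (L'.+1 <= L)%N by lia.
  have F : forall v, U1 v -> w0 v < w0 u -> p v = p c.
    move=> v hv hlt; apply/eqP; rewrite eq_sym; apply/negPn/negP => hpv.
    by have := hmn v hv hpv; lia.
  have G : forall v, U2 v -> w0 v < -(L'%:Z) -> p v = p c.
    move=> v; rewrite hU => /andP[h1 h2] h3; apply: F => //.
    have : w0 v != w0 u by apply/eqP => /hinj e; rewrite e eqxx in h2.
    lia.
  exists L'; rewrite /Inv -/U2; split.
  - lia.
  - move=> v hv; rewrite hU (hP1 v _); last by lia.
    by apply/negP => /eqP e; rewrite -e in hv; lia.
  - by move=> x y hx hy hx' hy'; rewrite (G x hx hx') (G y hy hy').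
  - case: hP3 => [hno|[j [hLj hjn hineq]]].
      by left => v hv; rewrite hU negb_and hno.
    case hpc: (p c == i).
      have hpu : (p u == i) = false.
        by apply/negP => /eqP e; move/eqP: hpc => e'; rewrite e e' eqxx in hcu.
      right; exists j; split => //; first lia.
      have eXi : Xi p w0 i L' j = (Xi p w0 i L j + Xi p w0 i L' L)%N.
        rewrite /Xi (cnt_split _ (fun v => w0 v < -(L%:Z))); congr (_ + _)%N;
          apply: cnt_ext => v /=; lia.
      have eXo : Xo p w0 i L' j = (Xo p w0 i L j + Xo p w0 i L' L)%N.
        rewrite /Xo (cnt_split _ (fun v => w0 v < -(L%:Z))); congr (_ + _)%N;
          apply: cnt_ext => v /=; lia.
      have eXo1 : Xo p w0 i L' L = 1%N.
        rewrite /Xo -[1%N]/(nat_of_bool (@predT T u)) -(cnt_at predT u); apply: cnt_ext => v /=.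
        case: (v =P u) => [->|hvu].
          have -> : (p u != i) by rewrite hpu.
          rewrite hL' /=; lia.
        apply/negP => /andP[hpv hr].
        have hv : U1 v by apply: hP1; lia.
        have hcv : p c != p v by move/eqP: hpc => ->; rewrite eq_sym.
        have := hmn v hv hcv => hle.
        by apply: hvu; apply: hinj; lia.
      have hB : (Bc p w0 v1 i s.+2 L' <= Bc p w0 v1 i s.+1 L + Xi p w0 i L' L)%N.
        apply: cnt_le_or => v; rewrite /= -/U2 -/U1 hU /=; have := hrange v; lia.
      move: hineq; rewrite -/u hpc hpu eXi eXo eXo1 /= -/U1; lia.
    have hB : Bc p w0 v1 i s.+2 L' = 0%N.
      rewrite /Bc cnt0 // => v; apply/negP => /andP[/andP[hpv hv] hw].
      by rewrite (G v hv hw) hpc in hpv.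
    have [j' [h1 h2 h3]] := single p i hinj hL' (leq_trans hL'L hL).
    by right; exists j'; split => //; rewrite hB.
have hall : forall x, U1 x -> p c = p x.
  move=> x hx; apply/eqP/negPn/negP => hpx; move/negP: hnex; apply.
  by apply/existsP; exists x; rewrite hx.
have hU' : forall v, U2 v = U1 v.
  move=> v; rewrite hU; case hv: (U1 v) => //=.
  by apply/negP => /eqP e; rewrite -e in hv; rewrite (hall u hv) eqxx in hcu.
exists L; rewrite /Inv -/U2; split => //.
- by move=> v hv; rewrite hU' hP1.
- by move=> x y; rewrite !hU'; exact: hP2.
- case: hP3 => [hno|[j [hLj hjn hineq]]].
    by left => v hv; rewrite hU' hno.
  case hpc: (p c == i).
    have hpu : (p u == i) = false.
      by apply/negP => /eqP e; move/eqP: hpc => e'; rewrite e e' eqxx in hcu.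
    right; exists j; split => //.
    have -> : Bc p w0 v1 i s.+2 L = Bc p w0 v1 i s.+1 L.
      by apply: cnt_ext => v /=; rewrite -/U2 hU'.
    move: hineq; rewrite hpc hpu; lia.
  left => v hv; apply/negP => hv'.
  rewrite hU' in hv'; by move: (hall v hv'); rewrite hv => e; rewrite e eqxx in hpc.
Qed.

Lemma inv_init (T : finType) k (p : T -> 'I_k) (w0 : T -> int) v1 (i : 'I_k)
  (hinj : injective w0) (hrange : forall v : T, - (#|T|%:Z) <= w0 v <= -1)
  (hv1 : w0 v1 = - (#|T|%:Z)) :
  Inv p w0 v1 i 1 (#|T| - 1).
Proof.
have hn : (0 < #|T|)%N by apply/card_gt0P; exists v1.
have hU : forall v, Uc p w0 v1 1 v = (v1 != v).
  by move=> v; rewrite /Uc cleanedS cleaned0 crawl_pos1.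
have hB : forall v, Uc p w0 v1 1 v -> w0 v < - ((#|T| - 1)%N%:Z) -> False.
  move=> v; rewrite hU => hv hw; have e : v = v1 by apply: hinj; have := hrange v; lia.
  by rewrite e eqxx in hv.
split.
- lia.
- by move=> v hv; rewrite hU; apply/eqP => e; rewrite -e in hv; lia.
- by move=> x y hx _ hw _; case: (hB x hx hw).
right.
have [j [h1 h2 h3]] := single p i hinj (u := v1) (L' := (#|T| - 1)%N) ltac:(lia) ltac:(lia).
exists j; split => //.
rewrite /Bc cnt0; last first.
  by move=> v; apply/negP => /andP[/andP[_ hv] hw]; case: (hB v hv hw).
by rewrite crawl_pos1.
Qed.

Lemma inv_final (T : finType) k (p : T -> 'I_k) (w0 : T -> int) v1 (i : 'I_k)
  (hinj : injective w0) (hrange : forall v : T, - (#|T|%:Z) <= w0 v <= -1) t L :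
  Inv p w0 v1 i t L -> outside_cleaned p w0 v1 i t ->
  (uncleaned_in_part p w0 v1 i t <= m_part p w0 i)%N.
Proof.
move=> [hL hP1 hP2 hP3] /forallP hout'.
have hout : forall u, Uc p w0 v1 t u -> p u = i.
  move=> u hu; apply/eqP/negPn/negP => hpu.
  by move: (implyP (hout' u) hpu); rewrite /Uc in hu; rewrite (negbTE hu).
rewrite /uncleaned_in_part card_cnt.
case: hP3 => [hno|[j [hLj hjn hineq]]].
  rewrite cnt0 // => v; apply/negP => /andP[/eqP hv].
  by apply/negP; apply: hno.
set cI := fun a : nat => cnt (fun v => (p v == i) && (-(a%:Z) <= w0 v)).
set cO := fun a : nat => cnt (fun v => (p v != i) && (-(a%:Z) <= w0 v)).
have es : cnt (fun u => (p u == i) && ~~ cleaned (kpart_rel p) w0 v1 t u) = (Bc p w0 v1 i t L + cI L)%N.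
  rewrite (cnt_split _ (fun v => w0 v < -(L%:Z))); congr (_ + _)%N.
  apply: cnt_ext => v /=.
  have hv := hP1 v; rewrite /Uc in hv; case: (p v == i) => //=; case E: (-(L%:Z) <= w0 v).
    by rewrite (hv E); lia.
  lia.
have eO : cO L = 0%N.
  rewrite /cO cnt0 // => v; apply/negP => /andP[hpv hw].
  by rewrite (hout v (hP1 v hw)) eqxx in hpv.
have eIj : cI j = (cI L + Xi p w0 i L j)%N.
  rewrite /cI (cnt_split _ (fun v => -(L%:Z) <= w0 v)); congr (_ + _)%N;
    apply: cnt_ext => v /=; lia.
have eOj : cO j = (cO L + Xo p w0 i L j)%N.
  rewrite /cO (cnt_split _ (fun v => -(L%:Z) <= w0 v)); congr (_ + _)%N;
    apply: cnt_ext => v /=; lia.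
have etot : (cI j + cO j)%N = j.
  rewrite -[RHS](cnt_top hinj hrange hjn) (cnt_split (fun v => -(j%:Z) <= w0 v) (fun v => p v == i)).
  by rewrite /cI /cO; congr (_ + _)%N; apply: cnt_ext => v /=; rewrite andbC.
rewrite es.
have hx : (cI j - cO j < #|T|.+1)%N by lia.
have hy : (cO j < #|T|.+1)%N by lia.
apply: leq_trans (leq_bigmax_cond (Ordinal hx) _) => /=; first lia.
apply/existsP; exists (Ordinal hy) => /=.
have e2 : ((cO j).*2 + (cI j - cO j))%N = j by rewrite -addnn; lia.
rewrite e2 hjn /=; apply/eqP.
rewrite /cleanest_in_part card_cnt.
have -> : cnt (fun v => (p v == i) && ((- (j%:Z) <= w0 v) && (w0 v <= -1))) = cI j.
  by apply: cnt_ext => v /=; have := hrange v; lia.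
lia.
Qed.

Lemma inv_all (T : finType) k (p : T -> 'I_k) (w0 : T -> int) v1 (i : 'I_k)
  (hk : (2 <= k)%N) (hpart : forall j : 'I_k, exists v : T, p v = j)
  (hinj : injective w0) (hrange : forall v : T, - (#|T|%:Z) <= w0 v <= -1)
  (hv1 : w0 v1 = - (#|T|%:Z)) s : exists L, Inv p w0 v1 i s.+1 L.
Proof.
elim: s => [|s [L hL]]; first by exists (#|T| - 1)%N; exact: inv_init.
exact: inv_step hL.
Qed.

Lemma progress (T : finType) k (p : T -> 'I_k) (w0 : T -> int) v1 (i : 'I_k)
  (hk : (2 <= k)%N) (hpart : forall j : 'I_k, exists v : T, p v = j)
  (hneg : forall v, w0 v < 0) s :
  ~~ outside_cleaned p w0 v1 i s.+1 ->
  (cnt (Uc p w0 v1 s.+3) < cnt (Uc p w0 v1 s.+1))%N.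
Proof.
move=> /forallPn [x]; rewrite negb_imply => /andP[hpx hcx].
have [hcu hU hmin] := step v1 hk hpart hneg s.
have [hcu' hU' hmin'] := step v1 hk hpart hneg s.+1.
set c := crawl_pos (kpart_rel p) w0 v1 s.+1 in hcu hU hmin.
set u := crawl_pos (kpart_rel p) w0 v1 s.+2 in hcu hU hmin hcu' hU' hmin'.
set u' := crawl_pos (kpart_rel p) w0 v1 s.+3 in hcu' hU' hmin'.
have dec : forall t (w : T), Uc p w0 v1 t w ->
    cnt (Uc p w0 v1 t) = (1 + cnt (fun v => Uc p w0 v1 t v && (w != v)))%N.
  move=> t w hw; rewrite (cnt_split _ (fun v => v == w)) cnt_at hw; congr (_ + _)%N.
  by apply: cnt_ext => v /=; rewrite eq_sym.
have sub2 : (cnt (Uc p w0 v1 s.+3) <= cnt (Uc p w0 v1 s.+2))%N.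
  by apply: cnt_le => v; rewrite hU' => /andP[].
case: (boolP [exists y, Uc p w0 v1 s.+1 y && (p c != p y)]) => [/existsP hex | hnex].
  have [hu _] := hmin hex.
  rewrite (dec _ u hu).
  have -> : cnt (fun v => Uc p w0 v1 s.+1 v && (u != v)) = cnt (Uc p w0 v1 s.+2).
    by apply: cnt_ext => v; rewrite hU.
  lia.
have hall : forall y, Uc p w0 v1 s.+1 y -> p c = p y.
  move=> y hy; apply/eqP/negPn/negP => hpy; move/negP: hnex; apply.
  by apply/existsP; exists y; rewrite hy.
have e12 : forall v, Uc p w0 v1 s.+2 v = Uc p w0 v1 s.+1 v.
  move=> v; rewrite hU; case hv: (Uc p w0 v1 s.+1 v) => //=.
  by apply/negP => /eqP e; rewrite -e in hv; rewrite (hall u hv) eqxx in hcu.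
have hx : Uc p w0 v1 s.+1 x by [].
have hex' : exists y, Uc p w0 v1 s.+2 y && (p u != p y).
  exists x; rewrite e12 hx /= -(hall x hx) eq_sym; exact: hcu.
have [hu' _] := hmin' hex'.
rewrite -(cnt_ext e12) (dec _ u' hu').
have -> : cnt (fun v => Uc p w0 v1 s.+2 v && (u' != v)) = cnt (Uc p w0 v1 s.+3).
  by apply: cnt_ext => v; rewrite hU'.
lia.
Qed.

Lemma exists_out (T : finType) k (p : T -> 'I_k) (w0 : T -> int) v1 (i : 'I_k)
  (hk : (2 <= k)%N) (hpart : forall j : 'I_k, exists v : T, p v = j)
  (hneg : forall v, w0 v < 0) m : forall s,
  (cnt (Uc p w0 v1 s.+1) <= m)%N -> exists t, outside_cleaned p w0 v1 i t.+1.
Proof.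
elim: m => [|m IH] s h; case: (boolP (outside_cleaned p w0 v1 i s.+1)) => [ho|hno];
  try by exists s.
  move: hno => /forallPn [x]; rewrite negb_imply => /andP[_ hcx].
  by have := @cnt_pos _ (Uc p w0 v1 s.+1) x hcx; lia.
apply: (IH s.+2); have := progress hk hpart hneg hno; lia.
Qed.

Unset Implicit Arguments.
Set Strict Implicit.

Theorem lemma1 (T : finType) (k : nat) (p : T -> 'I_k) (w0 : T -> int) (v1 : T)
  (hk : (3 <= k)%N)
  (hpart : forall j : 'I_k, exists v : T, p v = j)
  (hinj : injective w0)
  (hrange : forall v : T, - (#|T|%:Z) <= w0 v <= -1)
  (hv1 : w0 v1 = - (#|T|%:Z))
  (i : 'I_k) :
  exists t : nat,
    first_outside_cleaned p w0 v1 i t /\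
    (uncleaned_in_part p w0 v1 i t <= m_part p w0 i)%N.
Proof.
have hk2 : (2 <= k)%N by lia.
have hneg : forall v, w0 v < 0 by move=> v; have := hrange v; lia.
have [t0 ht0] : exists t, outside_cleaned p w0 v1 i t.+1.
  apply: (exists_out i hk2 hpart hneg (m := #|T|) (s := 0)).
  by rewrite -cnt_T; apply: cnt_le.
have hex : exists t, outside_cleaned p w0 v1 i t by exists t0.+1.
case: (ex_minnP hex) => tau htau hmin.
have hne0 : tau <> 0%N.
  move=> e; rewrite e in htau.
  have [x hx] := exists_other hk2 hpart i.
  by move: (forallP htau x); rewrite hx.
exists tau; split.
  rewrite /first_outside_cleaned htau /=; apply/forallP => s'; apply/negP => h.
  by have := hmin _ h; have := ltn_ord s'; lia.
case: tau htau hmin hne0 => [//|s] htau _ _.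
have [L hL] := inv_all i hk2 hpart hinj hrange hv1 s.
exact: (@inv_final T k p w0 v1 i hinj hrange _ L hL htau).
Qed.
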